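(* Let $K$ be a field of characteristic $\neq 2$, $n\ge1$, and let $\mathcal C$ be any EACP over $K$. Then $\mathcal C$ is not a division algebra, i.e. there exist $a,b\in\mathcal C$ with $a\neq0$ such that the equation $ax=b$ has no solution $x\in\mathcal C$.
   Context: An EACP over a field $K$ (characteristic $\neq 2$) is a $K$-algebra $\mathcal C$ with a basis $\{h_1,\dots,h_n,r\}$ (called a natural basis) whose multiplication is determined by bilinearity from $$h_ir=rh_i=\tfrac12\Big(\sum_{j=1}^n a_{ij}h_j+b_ir\Big),\qquad h_ih_j=0\ (i,j=1,\dots,n),\qquad rr=0,$$ for some constants $a_{ij},b_i\in K$. An algebra $\mathcal A$ is a division algebra if for all $a,b\in\mathcal A$ with $a\neq0$ the equations $ax=b$ and $xa=b$ are solvable in $\mathcal A$. *)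

(* Defs.v *)
From HB Require Import structures.
From mathcomp Require Import all_boot all_order all_algebra.
Set Implicit Arguments. Unset Strict Implicit. Unset Printing Implicit Defensive.
Import GRing.Theory.
Local Open Scope ring_scope.

Definition bilinear_mul (K : fieldType) (V : vectType K) (mul : V -> V -> V) : Prop :=
  (forall (c : K) (u v w : V), mul (c *: u + v) w = c *: mul u w + mul v w) /\
  (forall (c : K) (u v w : V), mul w (c *: u + v) = c *: mul w u + mul w v).

Definition natural_basis (K : fieldType) (V : vectType K) (n : nat)
    (mul : V -> V -> V) (h : 'I_n -> V) (r : V) (A : 'M[K]_n) (bv : 'rV[K]_n) : Prop :=
  basis_of fullv (r :: [seq h i | i <- enum 'I_n]) /\
  (forall i : 'I_n,
      mul (h i) r = 2%:R^-1 *: (\sum_(j < n) A i j *: h j + bv 0 i *: r)) /\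
  (forall i : 'I_n,
      mul r (h i) = 2%:R^-1 *: (\sum_(j < n) A i j *: h j + bv 0 i *: r)) /\
  (forall i j : 'I_n, mul (h i) (h j) = 0) /\
  mul r r = 0.

Definition is_EACP (K : fieldType) (V : vectType K) (n : nat) (mul : V -> V -> V) : Prop :=
  bilinear_mul mul /\
  exists (h : 'I_n -> V) (r : V) (A : 'M[K]_n) (bv : 'rV[K]_n),
    natural_basis mul h r A bv.

(* Main.v *)
Require Import Defs.
From HB Require Import structures.
From mathcomp Require Import all_boot all_order all_algebra.
Import GRing.Theory.
Local Open Scope ring_scope.

Theorem mainTheorem6 (K : fieldType) (n : nat) (V : vectType K) (mul : V -> V -> V) :
  2%N \notin [pchar K] -> (1 <= n)%N -> is_EACP n mul ->
  exists a b : V, a != 0 /\ ~ (exists x : V, mul a x = b).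
Proof.
move=> _ n1 [[bl br] [h [r [A [bv [Hb [Hhr [Hrh [Hhh Hrr]]]]]]]]].
set X := r :: [seq h i | i <- enum 'I_n].
have h0 : 'I_n by exact: (Ordinal n1).
set v := mul (h h0) r.
have m0 : forall w, mul w 0 = 0.
  move=> w; have := br 1 0 0 w; rewrite scale1r addr0.
  move/(congr1 (fun t => t - mul w 0)) => /= e.
  by move: e; rewrite scale1r addrK subrr.
have mD : forall w y z, mul w (y + z) = mul w y + mul w z.
  by move=> w y z; have := br 1 y z w; rewrite !scale1r.
have mZ : forall w c y, mul w (c *: y) = c *: mul w y.
  by move=> w c y; have := br c y 0 w; rewrite !m0 !addr0.
have img : forall x, mul (h h0) x \in <[v]>%VS.
  move=> x.
  have xs : x \in <<in_tuple X>>%VS by rewrite (eqP (andP Hb).1) memvf.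
  rewrite (coord_span xs).
  apply: (big_ind (fun y => mul (h h0) y \in <[v]>%VS)).
  - by rewrite m0 mem0v.
  - by move=> y z Hy Hz; rewrite mD rpredD.
  move=> i _; rewrite mZ rpredZ //.
  have : (in_tuple X)`_i \in X by exact: mem_nth (ltn_ord i).
  rewrite inE => /orP [/eqP -> | /mapP [j _ ->]]; first exact: memv_line.
  by rewrite Hhh mem0v.
have fX : free X := basis_free Hb.
move: (fX); rewrite free_cons => /andP [rnot fY].
have hnz : h h0 != 0.
  apply: (free_not0 fY); apply/mapP; exists h0 => //; by rewrite mem_enum.
have hin : h h0 \in <<[seq h i | i <- enum 'I_n]>>%VS.
  apply: memv_span; apply/mapP; exists h0 => //; by rewrite mem_enum.
case: (boolP (r \in <[v]>%VS)) => rv.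
  exists (h h0), (h h0); split => // -[x Hx].
  have hv := img x; rewrite Hx in hv.
  move: rv hv => /vlineP [c rc] /vlineP [d hd].
  have dnz : d != 0 by apply: contraNneq hnz => d0; rewrite hd d0 scale0r.
  have : v = d^-1 *: h h0 by rewrite hd scalerA mulVf // scale1r.
  move=> ev; move: rnot; rewrite rc ev scalerA.
  by rewrite rpredZ.
exists (h h0), r; split => // -[x Hx].
by move: rv; rewrite -Hx img.
Qed.
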